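(* With the reduced expression $t(\lambda_-)=u\,s_{\ell_1}\cdots s_{\ell_L}$ and roots $\tilde\beta_k$ as in the context, for every $1\le k\le M$ one has $w_\circ\overline{\tilde\beta_k}=\beta_k^\vee$, where $\beta_k=s_{i_N}\cdots s_{i_{k+1}}\alpha_{i_k}$.
   Context: Setting: $\mathfrak g$ finite-dimensional simple Lie algebra, simple roots $\{\alpha_i\}_{i\in I}$, simple coroots $\{\alpha_i^\vee\}$, roots $\Delta=\Delta^+\sqcup\Delta^-$, weights $P$, dominant weights $P^+$, Weyl group $W$, longest element $w_\circ$. For $\lambda\in P^+$: $S=\{i:\langle\lambda,\alpha_i^\vee\rangle=0\}$, $W_S=\langle s_i:i\in S\rangle$ with longest element $w_\circ^S$, $\Delta^+_S$ the positive roots in $\sum_{i\in S}\mathbb Z\alpha_i$; $\lambda_-=w_\circ\lambda$; $v(\lambda_-)$ the minimal-length element of $\{x\in W: x\lambda=\lambda_-\}$, so $w_\circ=v(\lambda_-)w_\circ^S$ with lengths adding. Fix reduced expressions $v(\lambda_-)=s_{i_1}\cdots s_{i_M}$ and $w_\circ^S=s_{i_{M+1}}\cdots s_{i_N}$, so $w_\circ=s_{i_1}\cdots s_{i_N}$ is reduced; put $\beta_j=s_{i_N}\cdots s_{i_{j+1}}\alpha_{i_j}$; then $\Delta^+\setminus\Delta^+_S=\{\beta_1,\dots,\beta_M\}$, and the total order $\prec$ on $\Delta^+$ is $\beta_1\succ\beta_2\succ\dots\succ\beta_N$. Affine: real roots of the untwisted affinization of the dual root system $\widetilde\Delta_{\rm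 aff}=\{\alpha^\vee+a\tilde\delta\}$, positive ones $\widetilde\Delta^+_{\rm aff}$ ($a>0$, or $a=0,\alpha\in\Delta^+$), $\widetilde\Delta^-_{\rm aff}=-\widetilde\Delta^+_{\rm aff}$; simple roots $\alpha_i^\vee$ ($i\in I$), $\alpha_0^\vee=\tilde\delta-\varphi^\vee$ ($\varphi$ highest short root), $I_{\rm aff}=I\sqcup\{0\}$; $\beta=\bar\beta+\deg(\beta)\tilde\delta$ with $\bar\beta\in\mathfrak h$. $W_{\rm ext}=t(P)\rtimes W$ acting by $v\,t(\nu)(\bar\beta+r\tilde\delta)=v\bar\beta+(r-\langle\nu,\bar\beta\rangle)\tilde\delta$; $\ell(x)=\#(\widetilde\Delta^+_{\rm aff}\cap x^{-1}\widetilde\Delta^-_{\rm aff})$; $\Omega$ the length-zero elements. The map $\Phi:\widetilde\Delta^+_{\rm aff}\cap t(\lambda_-)^{-1}\widetilde\Delta^-_{\rm aff}\to\mathbb Q_{\ge0}\times(\Delta^+\setminus\Delta^+_S)$, $\Phi(\beta)=\Big(\frac{\langle\lambda_-,\bar\beta\rangle-\deg(\beta)}{\langle\lambda_-,\bar\beta\rangle},\,w_\circ(\bar\beta)^\vee\Big)$ (where $(\alpha^\vee)^\vee=\alpha$) is injective. Order the target lexicographically: $(a,\alpha)<(b,\beta)$ iff $a<b$, or $a=b$ and $\alpha\succ\beta$; $\prec'$ is the pullback order. The reduced expression $t(\lambda_-)=u\,s_{\ell_1}\cdots s_{\ell_L}$ ($u\in\Omega$, $\ell_k\in I_{\rm aff}$)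 is the unique one with $\tilde\beta_j:=s_{\ell_L}\cdots s_{\ell_{j+1}}\alpha^\vee_{\ell_j}$ satisfying $\tilde\beta_1\prec'\dots\prec'\tilde\beta_L$ exhausting $\widetilde\Delta^+_{\rm aff}\cap t(\lambda_-)^{-1}\widetilde\Delta^-_{\rm aff}$. *)

(* Defs.v *)
From HB Require Import structures.
From mathcomp Require Import all_boot all_order all_algebra.
Set Implicit Arguments. Unset Strict Implicit. Unset Printing Implicit Defensive.
Import Order.TTheory GRing.Theory Num.Theory.
Local Open Scope ring_scope.

(* Conventions:
   - rank n, index set I = 'I_n, Cartan matrix A with A i j = <alpha_i^vee, alpha_j>;
   - d : symmetrizer, (alpha_i, alpha_j) := d i * A i j;
   - a root is stored in simple-root coordinates, a (co)root of the dual system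
     (element of the coroot lattice) in simple-coroot coordinates, a weight in
     fundamental-weight coordinates; all as 'rV[int]_n. *)

Section RootData.
Variables (n : nat) (A : 'M[int]_n) (d : 'I_n -> int).

Definition vec := 'rV[int]_n.

(* unit vector: alpha_i (root coords) or alpha_i^vee (coroot coords) *)
Definition ev (i : 'I_n) : vec := \row_j (((i == j) : nat)%:R).

(* simple root alpha_i in fundamental-weight coordinates *)
Definition alphaW (i : 'I_n) : vec := \row_k A k i.

(* pairing weight x coroot lattice *)
Definition pairWC (lam g : vec) : int := \sum_i lam 0 i * g 0 i.
(* pairing root lattice x coroot lattice: <alpha_j, alpha_i^vee> = A i j *)
Definition pairRC (c g : vec) : int := \sum_i \sum_j g 0 i * A i j * c 0 j.
Definition form (x y : vec) : int := \sum_i \sum_j x 0 i * d i * A i j * y 0 j.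

(* simple reflections on the root lattice, coroot lattice, weight lattice *)
Definition sR (i : 'I_n) (c : vec) : vec := c - pairRC c (ev i) *: ev i.
Definition sC (i : 'I_n) (g : vec) : vec := g - pairRC (ev i) g *: ev i.
Definition sW (i : 'I_n) (lam : vec) : vec := lam - lam 0 i *: alphaW i.

(* a word [:: i1; ...; ik] acts as s_{i1} o ... o s_{ik} *)
Definition actR (w : seq 'I_n) (c : vec) : vec := foldr sR c w.
Definition actC (w : seq 'I_n) (g : vec) : vec := foldr sC g w.
Definition actW (w : seq 'I_n) (lam : vec) : vec := foldr sW lam w.

(* equality in the Weyl group W (faithful action on the weight lattice) *)
Definition w_eq (s t : seq 'I_n) : Prop := forall lam, actW s lam = actW t lam.

Definition reduced_word (s : seq 'I_n) : Prop :=
  forall t, w_eq t s -> (size s <= size t)%N.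
Definition longest_word (w0 : seq 'I_n) : Prop :=
  reduced_word w0 /\ forall s, exists t, w_eq t s /\ (size t <= size w0)%N.
Definition in_parabolic (S : {set 'I_n}) (s : seq 'I_n) : Prop :=
  exists t, all (fun i => i \in S) t /\ w_eq t s.
Definition longest_parabolic_word (S : {set 'I_n}) (ws : seq 'I_n) : Prop :=
  reduced_word ws /\ in_parabolic S ws /\
  forall s, in_parabolic S s -> exists t, w_eq t s /\ (size t <= size ws)%N.
Definition min_length_word (lam mu : vec) (v : seq 'I_n) : Prop :=
  actW v lam = mu /\ forall x, actW x lam = mu -> (size v <= size x)%N.

Definition dominant (lam : vec) : Prop := forall i, 0 <= lam 0 i.

Definition is_root (c : vec) : Prop := exists (w : seq 'I_n) (i : 'I_n), c = actR w (ev i).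
Definition is_pos_root (c : vec) : Prop := is_root c /\ forall j, 0 <= c 0 j.
(* g = c^vee = 2 c / (c, c), written in simple-coroot coordinates
   (alpha_j is identified with d j * alpha_j^vee) *)
Definition is_coroot_of (g c : vec) : Prop :=
  forall j, form c c * g 0 j = 2 * c 0 j * d j.

Definition highest_short_root (phi : vec) : Prop :=
  is_root phi /\ (forall c, is_root c -> form phi phi <= form c c) /\
  (forall c, is_root c -> form c c = form phi phi -> forall j, c 0 j <= phi 0 j).

Definition finite_simple_cartan : Prop :=
  (0 < n)%N /\ (forall i, A i i = 2) /\ (forall i j, i != j -> A i j <= 0) /\
  (forall i j, A i j = 0 -> A j i = 0) /\
  (forall i, 0 < d i) /\ (forall i j, d i * A i j = d j * A j i) /\
  (forall x : vec, x != 0 -> 0 < form x x) /\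
  (forall S : {set 'I_n}, (forall i j, i \in S -> j \notin S -> A i j = 0) ->
      S = set0 \/ S = setT).

(* beta_j = s_{i_N} ... s_{i_{j+1}} alpha_{i_j}; betas iw = [:: beta_1; ...; beta_N] *)
Fixpoint betas (iw : seq 'I_n) : seq vec :=
  if iw is i :: w then actR (rev w) (ev i) :: betas w else [::].

(* ---- affine part: beta = (bar beta, deg beta) ---- *)
Definition aff := (vec * int)%type.

Definition aff_root (b : aff) : Prop := exists c, is_root c /\ is_coroot_of b.1 c.
Definition aff_pos (b : aff) : Prop :=
  exists c, is_root c /\ is_coroot_of b.1 c /\
            (0 < b.2 \/ (b.2 = 0 /\ is_pos_root c)).
Definition aff_neg (b : aff) : Prop := aff_pos (- b.1, - b.2).

(* action of v t(nu) in W_ext = t(P) x| W *)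
Definition wext_act (v : seq 'I_n) (nu : vec) (b : aff) : aff :=
  (actC v b.1, b.2 - pairWC nu b.1).

Definition in_Omega (v : seq 'I_n) (nu : vec) : Prop :=
  forall b, aff_pos b -> ~ aff_neg (wext_act v nu b).

(* affine simple reflections, I_aff = option 'I_n with None = 0;
   alpha_0^vee = tilde delta - phi^vee *)
Definition s_aff (phi phic : vec) (i : option 'I_n) (b : aff) : aff :=
  match i with
  | Some i => (sC i b.1, b.2)
  | None => (b.1 - pairRC phi b.1 *: phic, b.2 + pairRC phi b.1)
  end.
Definition simple_aff (phic : vec) (i : option 'I_n) : aff :=
  match i with Some i => (ev i, 0) | None => (- phic, 1) end.
Definition act_aff (phi phic : vec) (l : seq (option 'I_n)) (b : aff) : aff :=
  foldr (s_aff phi phic) b l.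

(* tilde beta_j = s_{l_L} ... s_{l_{j+1}} alpha^vee_{l_j} *)
Fixpoint tbetas (phi phic : vec) (l : seq (option 'I_n)) : seq aff :=
  if l is i :: w then act_aff phi phic (rev w) (simple_aff phic i) :: tbetas phi phic w
  else [::].

Definition tinv (mu : vec) (b : aff) : Prop :=
  aff_pos b /\ aff_neg (wext_act [::] mu b).

Definition aPhi (mu : vec) (b : aff) : rat :=
  ((pairWC mu b.1)%:~R - (b.2)%:~R) / (pairWC mu b.1)%:~R.
(* second component of Phi is beta_j, i.e. beta_j^vee = w0 (bar b) *)
Definition phi_idx (w0 iw : seq 'I_n) (b : aff) (j : nat) : Prop :=
  (1 <= j <= size iw)%N /\ is_coroot_of (actC w0 b.1) (nth 0 (betas iw) j.-1).
(* (a, beta_j) < (a', beta_j')  iff  a < a', or a = a' and beta_j succ beta_j' (j < j') *)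
Definition prec' (mu : vec) (w0 iw : seq 'I_n) (x y : aff) : Prop :=
  exists j j', phi_idx w0 iw x j /\ phi_idx w0 iw y j' /\
    (aPhi mu x < aPhi mu y \/ (aPhi mu x = aPhi mu y /\ (j < j')%N)).

End RootData.

Definition card_is (T : eqType) (P : T -> Prop) (m : nat) : Prop :=
  exists s : seq T, uniq s /\ size s = m /\ forall x, P x <-> x \in s.

(* Main.v *)
Require Import Defs.
From HB Require Import structures.
From mathcomp Require Import all_boot all_order all_algebra.
From mathcomp Require Import ring zify.
From Stdlib Require Import Classical ClassicalEpsilon.
Set Implicit Arguments. Unset Strict Implicit. Unset Printing Implicit Defensive.
Import Order.TTheory GRing.Theory Num.Theory.
Lemma sort_lemma (T : eqType) (xs : seq T) (x0 : T) (f : T -> rat) (J : T -> nat -> Prop)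
    (b : nat -> T) (M : nat) :
  uniq xs ->
  (forall i, (i.+1 < size xs)%N -> exists j j', J (nth x0 xs i) j /\ J (nth x0 xs i.+1) j' /\
     ((f (nth x0 xs i) < f (nth x0 xs i.+1))%R \/
      (f (nth x0 xs i) = f (nth x0 xs i.+1) /\ (j < j')%N))) ->
  (forall y, y \in xs -> (0 <= f y)%R) ->
  (forall j, (1 <= j <= M)%N -> [/\ b j \in xs, f (b j) = 0%R & J (b j) j]) ->
  (forall y j, y \in xs -> f y = 0%R -> J y j -> y = b j) ->
  (forall y j, J y j -> (1 <= j)%N) ->
  (forall y j j', J y j -> J y j' -> (j <= M)%N -> j = j') ->
  (M <= size xs)%N /\ forall k, (k < M)%N -> nth x0 xs k = b k.+1.
Proof.
move=> U h1 h2 h3 h4 hJ1 h5.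
have bJ : forall j j', (1 <= j <= M)%N -> (1 <= j' <= M)%N -> b j = b j' -> j = j'.
  move=> j j' hj hj' e; have [_ _ J1] := h3 j hj; have [_ _ J2] := h3 j' hj'.
  rewrite -e in J2; apply: h5 J1 J2 _; by case/andP: hj.
split.
  have -> : M = size (map b (iota 1 M)) by rewrite size_map size_iota.
  apply: uniq_leq_size.
    rewrite map_inj_in_uniq ?iota_uniq // => j j'; rewrite !mem_iota => hj hj'.
    by apply: bJ; lia.
  by move=> y /mapP [j]; rewrite mem_iota => hj ->; have [] := h3 j; first lia.
have mono : forall q p, (q <= p < size xs)%N -> (f (nth x0 xs q) <= f (nth x0 xs p))%R.
  move=> q p /andP [qp pL]; move: pL; rewrite -(subnKC qp).
  elim: (p - q)%N => [|m IH]; first by rewrite addn0.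
  rewrite addnS => hL; apply: le_trans (IH _) _; first lia.
  have [j [j' [_ [_ [h|[h _]]]]]] := h1 (q + m) hL; [exact: ltW|by rewrite h].
elim/ltn_ind=> k IH kM.
have hk1 : (1 <= k.+1 <= M)%N by lia.
have [bin fb Jb] := h3 k.+1 hk1.
set p := index (b k.+1) xs.
have pL : (p < size xs)%N by rewrite index_mem.
have xp : nth x0 xs p = b k.+1 by rewrite nth_index.
have xinj : forall i i', (i < size xs)%N -> (i' < size xs)%N -> nth x0 xs i = nth x0 xs i' -> i = i'.
  by move=> i i' hi hi'; move/eqP; rewrite nth_uniq // => /eqP.
case: (ltngtP p k) => hpk.
- have e := IH p hpk (ltn_trans hpk kM).
  have hp1 : (1 <= p.+1 <= M)%N by lia.
  have [_ _ Jp] := h3 p.+1 hp1; rewrite -e xp in Jp.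
  have := h5 _ _ _ Jp Jb (ltn_trans hpk kM); lia.
- have zero : forall q, (k <= q <= p)%N -> f (nth x0 xs q) = 0%R.
    move=> q hq; apply/eqP; rewrite eq_le; apply/andP; split.
      by rewrite -fb -xp; apply: mono; lia.
    apply: h2; rewrite mem_nth //; lia.
  have claim : forall q, (k <= q <= p)%N -> forall j, J (nth x0 xs q) j -> (k.+1 < j)%N.
    move=> q /andP [kq qp]; move: qp; rewrite -(subnKC kq).
    elim: (q - k)%N => [|m IHm] hq j.
      rewrite addn0 => Jx.
      have kL : (k < size xs)%N by lia.
      have kk : (k <= k <= p)%N by lia.
      have xb := h4 _ _ (mem_nth x0 kL) (zero k kk) Jx.
      have j1 := hJ1 _ _ Jx.
      rewrite ltnNge; apply/negP => jk.
      case: (ltngtP j k.+1) => hjk.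
      + have h1' : (j.-1 < k)%N by lia.
        have h2' : (j.-1 < M)%N by lia.
        have e := IH _ h1' h2'; rewrite prednK // -xb in e.
        have h3' : (j.-1 < size xs)%N by lia.
        have := xinj _ _ h3' kL e; lia.
      + lia.
      + rewrite hjk -xp in xb; have := xinj _ _ kL pL xb; lia.
    rewrite addnS => Jx.
    have hL : ((k + m).+1 < size xs)%N by lia.
    have [j1 [j2 [J1 [J2 [hf|[hf hj]]]]]] := h1 (k + m) hL.
      by move: hf; rewrite !zero ?ltxx //; lia.
    have hmp : (k + m <= p)%N by lia.
    have kj1 := IHm hmp _ J1.
    rewrite ltnNge; apply/negP => jk.
    have jM : (j <= M)%N by lia.
    have := h5 _ _ _ Jx J2 jM; lia.
  have kpp : (k <= p <= p)%N by lia.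
  have Jp : J (nth x0 xs p) k.+1 by rewrite xp.
  have := claim p kpp _ Jp; lia.
- by move: xp; rewrite hpk.
Qed.

Local Open Scope ring_scope.

Section Alg.
Variables (n : nat) (A : 'M[int]_n) (d : 'I_n -> int).
Hypothesis HAii : forall i, A i i = 2.
Hypothesis Hsym : forall i j, d i * A i j = d j * A j i.
Hypothesis Hdpos : forall i, 0 < d i.
Hypothesis Hform : forall x : 'rV[int]_n, x != 0 -> 0 < Defs.form A d x x.
Hypothesis Hoff : forall i j, i != j -> A i j <= 0.
Hypothesis Hzero : forall i j, A i j = 0 -> A j i = 0.

Local Notation vec := 'rV[int]_n.
Local Notation sR := (sR A).
Local Notation sC := (sC A).
Local Notation sW := (sW A).
Local Notation actR := (actR A).
Local Notation actC := (actC A).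
Local Notation actW := (actW A).

Lemma evE i j : (ev i : vec) 0 j = ((i == j) : nat)%:R.
Proof. by rewrite mxE. Qed.

Lemma pairRC_evr (c : vec) i : pairRC A c (ev i) = \sum_j A i j * c 0 j.
Proof.
rewrite /pairRC (bigD1 i) //= [X in _ + X]big1 => [|k /negPf ki]; last first.
  by apply: big1 => j _; rewrite evE eq_sym ki !mul0r.
rewrite addr0; apply: eq_bigr => j _; by rewrite evE eqxx mul1r.
Qed.

Lemma pairRC_evl (g : vec) i : pairRC A (ev i) g = \sum_k g 0 k * A k i.
Proof.
rewrite /pairRC; apply: eq_bigr => k _.
rewrite (bigD1 i) //= [X in _ + X]big1 => [|j /negPf ji]; last by rewrite evE eq_sym ji mulr0.
by rewrite addr0 evE eqxx mulr1.
Qed.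

Lemma pairRC_lin a (c1 c2 g : vec) :
  pairRC A (a *: c1 + c2) g = a * pairRC A c1 g + pairRC A c2 g.
Proof.
rewrite /pairRC mulr_sumr -big_split; apply: eq_bigr => i _.
rewrite mulr_sumr -big_split; apply: eq_bigr => j _; rewrite !mxE /=; ring.
Qed.

Lemma pairRC_linr a (c g1 g2 : vec) :
  pairRC A c (a *: g1 + g2) = a * pairRC A c g1 + pairRC A c g2.
Proof.
rewrite /pairRC mulr_sumr -big_split; apply: eq_bigr => i _.
rewrite mulr_sumr -big_split; apply: eq_bigr => j _; rewrite !mxE /=; ring.
Qed.

Lemma sR_lin i a (c1 c2 : vec) : sR i (a *: c1 + c2) = a *: sR i c1 + sR i c2.
Proof. apply/rowP => k; rewrite /Defs.sR !mxE pairRC_lin; ring. Qed.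

Lemma sC_lin i a (c1 c2 : vec) : sC i (a *: c1 + c2) = a *: sC i c1 + sC i c2.
Proof. apply/rowP => k; rewrite /Defs.sC !mxE pairRC_linr; ring. Qed.

Lemma sW_lin i a (c1 c2 : vec) : sW i (a *: c1 + c2) = a *: sW i c1 + sW i c2.
Proof. apply/rowP => k; rewrite /Defs.sW !mxE; ring. Qed.

Lemma actR_lin w a (c1 c2 : vec) : actR w (a *: c1 + c2) = a *: actR w c1 + actR w c2.
Proof. by elim: w => //= i w ->; rewrite sR_lin. Qed.
Lemma actC_lin w a (c1 c2 : vec) : actC w (a *: c1 + c2) = a *: actC w c1 + actC w c2.
Proof. by elim: w => //= i w ->; rewrite sC_lin. Qed.
Lemma actW_lin w a (c1 c2 : vec) : actW w (a *: c1 + c2) = a *: actW w c1 + actW w c2.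
Proof. by elim: w => //= i w ->; rewrite sW_lin. Qed.

Lemma actR0 w : actR w 0 = 0.
Proof. have h := actR_lin w 1 0 0; rewrite scale1r !addr0 scale1r in h.
apply: (@addrI _ (actR w 0)); rewrite addr0; exact: esym h. Qed.
Lemma actRD w (c1 c2 : vec) : actR w (c1 + c2) = actR w c1 + actR w c2.
Proof. by have := actR_lin w 1 c1 c2; rewrite !scale1r. Qed.
Lemma actRZ w a (c : vec) : actR w (a *: c) = a *: actR w c.
Proof. by have := actR_lin w a c 0; rewrite !addr0 actR0 addr0. Qed.
Lemma actRN w (c : vec) : actR w (- c) = - actR w c.
Proof. by rewrite -scaleN1r actRZ scaleN1r. Qed.
Lemma actC0 w : actC w 0 = 0.
Proof. have h := actC_lin w 1 0 0; rewrite scale1r !addr0 scale1r in h.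
apply: (@addrI _ (actC w 0)); rewrite addr0; exact: esym h. Qed.
Lemma actCD w (c1 c2 : vec) : actC w (c1 + c2) = actC w c1 + actC w c2.
Proof. by have := actC_lin w 1 c1 c2; rewrite !scale1r. Qed.
Lemma actCZ w a (c : vec) : actC w (a *: c) = a *: actC w c.
Proof. by have := actC_lin w a c 0; rewrite !addr0 actC0 addr0. Qed.
Lemma actCN w (c : vec) : actC w (- c) = - actC w c.
Proof. by rewrite -scaleN1r actCZ scaleN1r. Qed.
Lemma actW0 w : actW w 0 = 0.
Proof. have h := actW_lin w 1 0 0; rewrite scale1r !addr0 scale1r in h.
apply: (@addrI _ (actW w 0)); rewrite addr0; exact: esym h. Qed.

Lemma actR_cat s t c : actR (s ++ t) c = actR s (actR t c).
Proof. by rewrite /Defs.actR foldr_cat. Qed.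
Lemma actC_cat s t c : actC (s ++ t) c = actC s (actC t c).
Proof. by rewrite /Defs.actC foldr_cat. Qed.
Lemma actW_cat s t c : actW (s ++ t) c = actW s (actW t c).
Proof. by rewrite /Defs.actW foldr_cat. Qed.

Lemma pairRC_evev i : pairRC A (ev i) (ev i) = 2.
Proof.
rewrite pairRC_evr (bigD1 i) //= [X in _ + X]big1 => [|j /negPf ji]; last by rewrite evE eq_sym ji mulr0.
by rewrite evE eqxx mulr1 addr0 HAii.
Qed.

Lemma sRK i : involutive (sR i).
Proof.
move=> c; rewrite /Defs.sR; set P := pairRC A c (ev i).
have -> : c - P *: ev i = (-P) *: ev i + c by rewrite scaleNr addrC.
rewrite pairRC_lin pairRC_evev -/P.
apply/rowP => k; rewrite !mxE /=; ring.
Qed.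

Lemma sCK i : involutive (sC i).
Proof.
move=> c; rewrite /Defs.sC; set P := pairRC A (ev i) c.
have -> : c - P *: ev i = (-P) *: ev i + c by rewrite scaleNr addrC.
rewrite pairRC_linr pairRC_evev -/P.
apply/rowP => k; rewrite !mxE /=; ring.
Qed.

Lemma sWK i : involutive (sW i).
Proof.
move=> c; apply/rowP => k; rewrite /Defs.sW !mxE HAii; ring.
Qed.

Lemma actR_revK w : cancel (actR w) (actR (rev w)).
Proof.
elim: w => //= i w IH c; rewrite rev_cons -cats1 actR_cat /= sRK; exact: IH.
Qed.
Lemma actR_Krev w : cancel (actR (rev w)) (actR w).
Proof. by have := actR_revK (rev w); rewrite revK. Qed.
Lemma actC_revK w : cancel (actC w) (actC (rev w)).
Proof.
elim: w => //= i w IH c; rewrite rev_cons -cats1 actC_cat /= sCK; exact: IH.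
Qed.
Lemma actC_Krev w : cancel (actC (rev w)) (actC w).
Proof. by have := actC_revK (rev w); rewrite revK. Qed.
Lemma actW_revK w : cancel (actW w) (actW (rev w)).
Proof.
elim: w => //= i w IH c; rewrite rev_cons -cats1 actW_cat /= sWK; exact: IH.
Qed.
Lemma actW_Krev w : cancel (actW (rev w)) (actW w).
Proof. by have := actW_revK (rev w); rewrite revK. Qed.

Lemma pairWC_sW i (l g : vec) : pairWC (sW i l) g = pairWC l (sC i g).
Proof.
rewrite /pairWC /Defs.sW /Defs.sC pairRC_evl.
under eq_bigr do rewrite !mxE.
under [RHS]eq_bigr do rewrite !mxE.
rewrite (eq_bigr (fun k => l 0 k * g 0 k - l 0 i * (A k i * g 0 k))); last by move=> k _; ring.
set Q := \sum_k g 0 k * A k i.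
rewrite [RHS](eq_bigr (fun k => l 0 k * g 0 k - Q * (l 0 k * ((i == k) : nat)%:R))); last by move=> k _; ring.
rewrite !sumrB; congr (_ - _).
rewrite -mulr_sumr -mulr_sumr [in RHS](bigD1 i) //= [X in _ = _ * (_ + X)]big1 => [|k /negPf ki]; last by rewrite eq_sym ki mulr0.
rewrite eqxx addr0 mulr1 /Q mulrC; congr (_ * _); apply: eq_bigr => k _; ring.
Qed.

Lemma pairWC_actW w (l g : vec) : pairWC (actW w l) g = pairWC l (actC (rev w) g).
Proof.
elim: w l g => //= i w IH l g; rewrite pairWC_sW rev_cons -cats1 actC_cat /=.
exact: IH.
Qed.

Lemma pairWC_evl k (g : vec) : pairWC (ev k) g = g 0 k.
Proof.
rewrite /pairWC (bigD1 k) //= big1 => [|j /negPf kj]; last by rewrite evE eq_sym kj mul0r.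
by rewrite evE eqxx mul1r addr0.
Qed.


Local Notation form := (Defs.form A d).
Local Notation coroot := (is_coroot_of A d).

Lemma form_lin a (x y z : vec) : form (a *: x + y) z = a * form x z + form y z.
Proof.
rewrite /Defs.form mulr_sumr -big_split; apply: eq_bigr => i _.
rewrite mulr_sumr -big_split; apply: eq_bigr => j _; rewrite !mxE /=; ring.
Qed.
Lemma form_linr a (x y z : vec) : form z (a *: x + y) = a * form z x + form z y.
Proof.
rewrite /Defs.form mulr_sumr -big_split; apply: eq_bigr => i _.
rewrite mulr_sumr -big_split; apply: eq_bigr => j _; rewrite !mxE /=; ring.
Qed.
Lemma form_sym (x y : vec) : form x y = form y x.
Proof.
rewrite /Defs.form exchange_big; apply: eq_bigr => i _; apply: eq_bigr => j _.
transitivity (x 0 j * (d j * A j i) * y 0 i); first ring.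
rewrite Hsym; ring.
Qed.
Lemma form_evl i (c : vec) : form (ev i) c = d i * pairRC A c (ev i).
Proof.
rewrite pairRC_evr /Defs.form (bigD1 i) //= [X in _ + X]big1 => [|k /negPf ki]; last first.
  by apply: big1 => j _; rewrite evE eq_sym ki !mul0r.
rewrite addr0 mulr_sumr; apply: eq_bigr => j _; rewrite evE eqxx mul1r; ring.
Qed.
Lemma form_evev i : form (ev i) (ev i) = 2 * d i.
Proof. by rewrite form_evl pairRC_evev mulrC. Qed.

Lemma sR_alt i (c : vec) : sR i c = (- pairRC A c (ev i)) *: ev i + c.
Proof. by rewrite /Defs.sR scaleNr addrC. Qed.

Lemma form_sR i (c : vec) : form (sR i c) (sR i c) = form c c.
Proof.
rewrite sR_alt; set P := pairRC A c (ev i).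
rewrite form_lin !form_linr form_evev [form c (ev i)]form_sym form_evl -/P; ring.
Qed.
Lemma form_actR w (c : vec) : form (actR w c) (actR w c) = form c c.
Proof. by elim: w => //= i w IH; rewrite form_sR. Qed.
Lemma form0l (z : vec) : form 0 z = 0.
Proof. have h := form_lin 1 0 0 z; rewrite scale1r !addr0 mul1r in h.
apply: (@addrI _ (form 0 z)); rewrite addr0; exact: esym h. Qed.
Lemma form0r (z : vec) : form z 0 = 0.
Proof. have h := form_linr 1 0 0 z; rewrite scale1r !addr0 mul1r in h.
apply: (@addrI _ (form z 0)); rewrite addr0; exact: esym h. Qed.
Lemma formN (c : vec) : form (- c) (- c) = form c c.
Proof.
have -> : - c = (-1) *: c + 0 by rewrite addr0 scaleN1r.
rewrite form_lin form0l form_linr form0r; ring.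
Qed.

Lemma coroot_ev i : coroot (ev i) (ev i).
Proof.
move=> j; rewrite form_evev !evE; case: (eqVneq i j) => [->|_] /=; ring.
Qed.

Lemma coroot_sR i (g c : vec) : coroot g c -> coroot (sC i g) (sR i c).
Proof.
move=> H j; rewrite form_sR /Defs.sR /Defs.sC !mxE.
set P := pairRC A c (ev i); set Q := pairRC A (ev i) g.
have HQ : form c c * Q = 2 * d i * P.
  rewrite /Q /P pairRC_evl pairRC_evr mulr_sumr mulr_sumr; apply: eq_bigr => k _.
  transitivity (form c c * g 0 k * A k i); first ring.
  rewrite H; transitivity (2 * c 0 k * (d k * A k i)); first ring.
  rewrite Hsym; ring.
case: (eqVneq i j) => [<-|_] /=.
  rewrite mulrBr H mulr1 HQ; ring.
transitivity (form c c * g 0 j); first ring.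
rewrite H; ring.
Qed.

Lemma coroot_act w (g c : vec) : coroot g c -> coroot (actC w g) (actR w c).
Proof. by elim: w => //= i w IH H; apply: coroot_sR; apply: IH. Qed.

Lemma coroot_N (g c : vec) : coroot g c -> coroot (- g) (- c).
Proof. move=> H j; rewrite formN !mxE; transitivity (- (form c c * g 0 j)); first ring.
rewrite H; ring. Qed.

Lemma coroot_uniq_g (g g' c : vec) : coroot g c -> coroot g' c -> form c c != 0 -> g = g'.
Proof.
move=> H H' F0; apply/rowP => j; apply: (mulfI F0); by rewrite H H'.
Qed.

Lemma coroot_uniq_c (g c c' : vec) : coroot g c -> coroot g c' ->
  0 < form c c -> 0 < form c' c' -> c = c'.
Proof.
move=> H H' F0 F0'.
set F := form c c in H F0 *; set F' := form c' c' in H' F0' *.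
have E : F *: c' = F' *: c.
  apply/rowP => j; rewrite !mxE.
  have dj : 2 * d j != 0 by rewrite mulf_neq0 // gt_eqF // Hdpos.
  apply: (mulIf dj); have := H j; have := H' j.
  move=> e1 e2; rewrite (_ : F * c' 0 j * (2 * d j) = F * (F' * g 0 j)).
    rewrite (_ : F' * c 0 j * (2 * d j) = F' * (F * g 0 j)); first ring.
    by rewrite e2; ring.
  by rewrite e1; ring.
have e : F * (F * F') = F' * (F' * F).
  have := congr1 (fun x => form x x) E.
  rewrite -[F *: c']addr0 -[F' *: c]addr0 !form_lin !form0l !form_linr !form0r !addr0.
  by rewrite -/F -/F'.
have FF : F = F'.
  have : F * F' * (F - F') = 0.
    transitivity (F * (F * F') - F' * (F' * F)); first ring.
    by rewrite e subrr.
  move/eqP; rewrite !mulf_eq0 subr_eq0 (gt_eqF F0) (gt_eqF F0') /=; by move/eqP.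
apply/rowP => j; have := congr1 (fun x : vec => x 0 j) E; rewrite /= !mxE -FF.
by move/(mulfI (negbT (gt_eqF F0))).
Qed.


Local Notation w_eq := (w_eq A).

Lemma weq_refl s : w_eq s s. Proof. by []. Qed.
Lemma weq_sym s t : w_eq s t -> w_eq t s. Proof. by move=> h l; rewrite h. Qed.
Lemma weq_trans s t u : w_eq s t -> w_eq t u -> w_eq s u.
Proof. by move=> h1 h2 l; rewrite h1 h2. Qed.
Lemma weq_catl a s t : w_eq s t -> w_eq (a ++ s) (a ++ t).
Proof. by move=> h l; rewrite !actW_cat h. Qed.
Lemma weq_catr b s t : w_eq s t -> w_eq (s ++ b) (t ++ b).
Proof. by move=> h l; rewrite !actW_cat h. Qed.
Lemma weq_rev s t : w_eq s t -> w_eq (rev s) (rev t).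
Proof.
move=> h l; rewrite -{1}[l](actW_Krev t) -h actW_revK //.
Qed.
Lemma weq_actC s t g : w_eq s t -> actC s g = actC t g.
Proof.
move=> h; apply/rowP => k; rewrite -!pairWC_evl.
rewrite -[s]revK -[t]revK -!pairWC_actW; congr pairWC.
exact: weq_rev.
Qed.

Definition emb (c : vec) : vec := \row_k \sum_j A k j * c 0 j.

Lemma emb_sR i c : emb (sR i c) = sW i (emb c).
Proof.
apply/rowP => k; rewrite /emb /Defs.sW /Defs.sR !mxE pairRC_evr.
under eq_bigr do rewrite !mxE.
rewrite (eq_bigr (fun j => A k j * c 0 j - (\sum_j0 A i j0 * c 0 j0) * (A k j * ((i == j) : nat)%:R)));
  last by move=> j _; ring.
rewrite sumrB; congr (_ - _); rewrite -mulr_sumr; congr (_ * _).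
rewrite (bigD1 i) //= [X in _ + X]big1 => [|j /negPf ij].
  by rewrite eqxx mulr1 addr0.
by rewrite eq_sym ij mulr0.
Qed.
Lemma emb_act w c : emb (actR w c) = actW w (emb c).
Proof. by elim: w => //= i w IH; rewrite emb_sR IH. Qed.
Lemma embB c c' : emb (c - c') = emb c - emb c'.
Proof.
apply/rowP => k; rewrite !mxE -sumrB; apply: eq_bigr => j _; rewrite !mxE; ring.
Qed.
Lemma emb_inj c c' : emb c = emb c' -> c = c'.
Proof.
move=> h; apply/eqP; rewrite -subr_eq0; apply/negPn/negP => nz.
have := Hform nz; set x := c - c'.
have ex : emb x = 0 by rewrite /x embB h subrr.
clearbody x.
have -> : Defs.form A d x x = \sum_i x 0 i * d i * (emb x) 0 i.
  rewrite /Defs.form; apply: eq_bigr => i _; rewrite [emb x 0 i]mxE mulr_sumr.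
  apply: eq_bigr => j _; ring.
have -> : \sum_i x 0 i * d i * (emb x) 0 i = 0.
  by rewrite ex; apply: big1 => i _; rewrite mxE mulr0.
by rewrite ltxx.
Qed.
Lemma weq_actR s t c : w_eq s t -> actR s c = actR t c.
Proof. by move=> h; apply: emb_inj; rewrite !emb_act h. Qed.

Definition pb (P : Prop) : bool := if excluded_middle_informative P then true else false.
Lemma pbP (P : Prop) : reflect P (pb P).
Proof. by rewrite /pb; case: excluded_middle_informative => h; constructor. Qed.

Definition lenQ (P : pred 'I_n) (w : seq 'I_n) (k : nat) : bool :=
  pb (exists t, all P t /\ size t = k /\ w_eq t w) || (k == size w).
Lemma lenQ_ex P w : exists k, lenQ P w k.
Proof. by exists (size w); rewrite /lenQ eqxx orbT. Qed.
Definition lenP P w := ex_minn (lenQ_ex P w).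

Lemma lenP_le P t w : all P t -> w_eq t w -> (lenP P w <= size t)%N.
Proof.
move=> Pt h; rewrite /lenP; case: ex_minnP => m _ hm; apply: hm.
by apply/orP; left; apply/pbP; exists t.
Qed.
Lemma lenP_size P w : (lenP P w <= size w)%N.
Proof.
rewrite /lenP; case: ex_minnP => m _ hm; apply: hm; by rewrite /lenQ eqxx orbT.
Qed.
Lemma lenP_ex P w : all P w -> exists t, [/\ all P t, size t = lenP P w & w_eq t w].
Proof.
move=> Pw; rewrite /lenP; case: ex_minnP => m /orP [/pbP [t [Pt [st ht]]]|/eqP ->] _.
  by exists t.
by exists w.
Qed.
Lemma lenP_weq P w w' : all P w -> all P w' -> w_eq w w' -> lenP P w = lenP P w'.
Proof.
move=> Pw Pw' h; apply/eqP; rewrite eqn_leq; apply/andP; split.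
  have [t [Pt <- ht]] := lenP_ex Pw'; apply: lenP_le => //; exact: weq_trans ht (weq_sym h).
have [t [Pt <- ht]] := lenP_ex Pw; apply: lenP_le => //; exact: weq_trans ht h.
Qed.

Definition len w := lenP predT w.
Lemma len_le t w : w_eq t w -> (len w <= size t)%N.
Proof. by move=> h; apply: lenP_le => //; apply/allP. Qed.
Lemma len_ex w : exists t, size t = len w /\ w_eq t w.
Proof. by have [|t [_ h1 h2]] := @lenP_ex predT w; [apply/allP|exists t]. Qed.
Lemma len_weq w w' : w_eq w w' -> len w = len w'.
Proof. by apply: lenP_weq; apply/allP. Qed.
Lemma len_size w : (len w <= size w)%N.
Proof. exact: lenP_size. Qed.
Lemma len_cat s t w : w_eq (s ++ t) w -> (len w <= len s + len t)%N.
Proof.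
move=> h; have [s' [hs es]] := len_ex s; have [t' [ht et]] := len_ex t.
rewrite -hs -ht -size_cat; apply: len_le.
apply: weq_trans h; apply: weq_trans (weq_catl _ et); exact: weq_catr.
Qed.
Lemma lenP_len P w : all P w -> (len w <= lenP P w)%N.
Proof. by move=> Pw; have [t [_ <- h]] := lenP_ex Pw; apply: len_le. Qed.
Lemma reducedP s : reduced_word A s <-> len s = size s.
Proof.
split=> [h|h t ht].
  apply/eqP; rewrite eqn_leq len_size /=; have [t [<- ht]] := len_ex s; exact: h.
by rewrite -h; apply: len_le.
Qed.

Lemma weq_rcons i s t : w_eq s t -> w_eq (rcons s i) (rcons t i).
Proof. by rewrite -!cats1; apply: weq_catr. Qed.

Lemma weq_ii s i t : w_eq (s ++ [:: i; i] ++ t) (s ++ t).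
Proof. by move=> l; rewrite !actW_cat /= sWK. Qed.


Definition two2 (s s' : 'I_n) (x y : int) : vec := x *: ev s + y *: ev s'.

Lemma sum_ev (f : 'I_n -> int) i : \sum_j f j * ((i == j) : nat)%:R = f i.
Proof.
rewrite (bigD1 i) //= [X in _ + X]big1 => [|j /negPf ji]; last by rewrite eq_sym ji mulr0.
by rewrite eqxx mulr1 addr0.
Qed.

Lemma pairRC_two2 s s' x y i :
  pairRC A (x *: ev s + y *: ev s') (ev i) = A i s * x + A i s' * y.
Proof.
rewrite pairRC_evr; under eq_bigr do rewrite !mxE.
rewrite (eq_bigr (fun j => (A i j * x) * ((s == j) : nat)%:R + (A i j * y) * ((s' == j) : nat)%:R));
  last by move=> j _; ring.
by rewrite big_split /= !sum_ev.
Qed.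

Lemma sR_two2_l s s' x y : s != s' ->
  sR s (two2 s s' x y) = two2 s s' (- x - A s s' * y) y.
Proof.
move=> ss; rewrite /two2 sR_alt pairRC_two2 HAii.
apply/rowP => k; rewrite !mxE /=; ring.
Qed.

Lemma sR_two2_r s s' x y : s != s' ->
  sR s' (two2 s s' x y) = two2 s s' x (- y - A s' s * x).
Proof.
move=> ss; rewrite /two2 sR_alt pairRC_two2 HAii.
apply/rowP => k; rewrite !mxE /=; ring.
Qed.

Lemma two2C s s' x y : two2 s s' x y = two2 s' s y x.
Proof. by rewrite /two2 addrC. Qed.

Fixpoint altE (x y : 'I_n) (k : nat) : seq 'I_n :=
  if k is k'.+1 then rcons (altE y x k') y else [::].

Fixpoint alt2 (a b : int) (k : nat) (x y : int) : int * int :=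
  if k is k'.+1 then let p := alt2 b a k' (- y - b * x) x in (p.2, p.1) else (x, y).

Lemma alt2P k s s' x y : s != s' ->
  actR (altE s s' k) (two2 s s' x y) =
  two2 s s' (alt2 (A s s') (A s' s) k x y).1 (alt2 (A s s') (A s' s) k x y).2.
Proof.
elim: k s s' x y => //= k IH s s' x y ss.
rewrite -cats1 actR_cat /= sR_two2_r // two2C IH 1?eq_sym // two2C //.
Qed.

Fixpoint alt2W (a b : int) (k : nat) (u v X Y : int) : int * int * int * int :=
  if k is k'.+1 then
    let '(v1, u1, Y1, X1) := alt2W b a k' (- v) (u - v * a) (Y - v) X in (u1, v1, X1, Y1)
  else (u, v, X, Y).

Lemma sW_two s s' (mu : vec) X Y : s != s' ->
  let l := mu + X *: alphaW A s + Y *: alphaW A s' in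
  sW s' l = mu + X *: alphaW A s + (Y - l 0 s') *: alphaW A s' /\
  (sW s' l) 0 s = l 0 s - l 0 s' * A s s' /\ (sW s' l) 0 s' = - l 0 s'.
Proof.
move=> ss l; split; first by apply/rowP => k; rewrite /Defs.sW /l !mxE; ring.
by rewrite /Defs.sW /l !mxE !HAii; split; ring.
Qed.

Lemma alt2WP k s s' (mu : vec) X Y : s != s' ->
  let l := mu + X *: alphaW A s + Y *: alphaW A s' in
  let r := alt2W (A s s') (A s' s) k (l 0 s) (l 0 s') X Y in
  actW (altE s s' k) l = mu + r.1.2 *: alphaW A s + r.2 *: alphaW A s'.
Proof.
elim: k s s' mu X Y => [|k IH] s s' mu X Y ss l r //=.
rewrite -cats1 actW_cat /=.
have [e1 [e2 e3]] := sW_two mu X Y ss.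
rewrite -/l in e1 e2 e3; rewrite e1.
have h := IH s' s mu (Y - l 0 s') X; rewrite eq_sym in h; have {h} := h ss.
cbv zeta.
set l' := mu + (Y - l 0 s') *: alphaW A s' + X *: alphaW A s.
have el' : l' = sW s' l by rewrite e1 /l' addrAC.
rewrite el' e2 e3 -e1 => ->; rewrite /r /=.
case: (alt2W _ _ _ _ _ _ _) => [[[v1 u1] Y1] X1] /=; by rewrite addrAC.
Qed.


Lemma alt2WP' k s s' (l : vec) : s != s' ->
  let r := alt2W (A s s') (A s' s) k (l 0 s) (l 0 s') 0 0 in
  actW (altE s s' k) l = l + r.1.2 *: alphaW A s + r.2 *: alphaW A s'.
Proof.
move=> ss; have := alt2WP k l 0 0 ss; rewrite !scale0r !addr0; exact.
Qed.

Lemma size_altE x y k : size (altE x y k) = k.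
Proof. by elim: k x y => //= k IH x y; rewrite size_rcons IH. Qed.

Definition I2 (s s' : 'I_n) : pred 'I_n := fun x => (x == s) || (x == s').
Lemma I2C s s' : I2 s s' =1 I2 s' s.
Proof. by move=> x; rewrite /I2 orbC. Qed.

Lemma altE_char x y t : x != y -> all (I2 x y) t ->
  (forall p q z, t <> p ++ z :: z :: q) -> last y t = y -> t = altE x y (size t).
Proof.
elim/last_ind: t x y => [//|t z IH] x y xy Pt nadj.
rewrite last_rcons => zy; subst z.
rewrite size_rcons /=; congr rcons.
have Pt' : all (I2 y x) t.
  by move: Pt; rewrite all_rcons => /andP [_]; apply: sub_all => w; rewrite I2C.
have nadj' : forall p q z, t <> p ++ z :: z :: q.
  by move=> p q z et; apply: (nadj p (rcons q y) z); rewrite et rcons_cat.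
apply: IH => //; first by rewrite eq_sym.
move: Pt' nadj' nadj; case/lastP: t {Pt} => // t z.
rewrite all_rcons last_rcons => /andP [Pz _] na nadj.
move: Pz; rewrite /I2 => /orP [/eqP zy|/eqP zx]; last exact zx.
exfalso; apply: (nadj t [::] y); by rewrite zy -!cats1 -catA.
Qed.

Lemma formZl a (x z : vec) : form (a *: x) z = a * form x z.
Proof. by rewrite -[a *: x]addr0 form_lin form0l addr0. Qed.
Lemma formZr a (x z : vec) : form z (a *: x) = a * form z x.
Proof. by rewrite -[a *: x]addr0 form_linr form0r addr0. Qed.

Lemma form_two2 s s' p q :
  form (two2 s s' p q) (two2 s s' p q) =
  p * (d s * (A s s * p + A s s' * q)) + q * (d s' * (A s' s * p + A s' s' * q)).
Proof.
by rewrite {1}/two2 form_lin formZl !form_evl !pairRC_two2.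
Qed.

Lemma pair_cases s s' : s != s' ->
  (A s s' = 0 /\ A s' s = 0) \/ (A s s' = -1 /\ A s' s = -1) \/
  (A s s' = -1 /\ A s' s = -2) \/ (A s s' = -2 /\ A s' s = -1) \/
  (A s s' = -1 /\ A s' s = -3) \/ (A s s' = -3 /\ A s' s = -1).
Proof.
move=> ss.
have ha := Hoff ss.
have hb' : A s' s <= 0 by apply: Hoff; rewrite eq_sym.
have z1 := @Hzero s s'; have z2 := @Hzero s' s.
have hx : two2 s s' (- A s s') 2 != 0.
  apply/negP => /eqP /rowP /(_ s'); rewrite !mxE eqxx (negPf ss) /=.
  by rewrite mulr0 add0r mulr1.
have := Hform hx; rewrite form_two2 !HAii.
have ds' := Hdpos s'.
have -> : - A s s' * (d s * (2 * - A s s' + A s s' * 2)) +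
          2 * (d s' * (A s' s * - A s s' + 2 * 2)) = 2 * d s' * (4 - A s s' * A s' s) by ring.
rewrite pmulr_rgt0 ?mulr_gt0 // subr_gt0 => hab.
set a := A s s' in ha z1 z2 hab *; set b := A s' s in hb' z1 z2 hab *.
have [a0|a0] := eqVneq a 0.
  by left; split => //; apply: z1.
have [b0|b0] := eqVneq b 0.
  by exfalso; move/eqP: a0; apply; apply: z2.
right; lia.
Qed.

Definition mdih (a b : int) : nat :=
  if a * b == 0 then 2 else if a * b == 1 then 3 else if a * b == 2 then 4 else 6.

Lemma braid s s' : s != s' ->
  w_eq (altE s s' (mdih (A s s') (A s' s))) (altE s' s (mdih (A s s') (A s' s))).
Proof.
move=> ss l.
have ss' : s' != s by rewrite eq_sym.
rewrite (alt2WP' _ _ ss) (alt2WP' _ _ ss') [in RHS]addrAC.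
have [[ha hb]|[[ha hb]|[[ha hb]|[[ha hb]|[[ha hb]|[ha hb]]]]]] := pair_cases ss;
 rewrite ha hb /mdih /=; congr (_ + _ *: _ + _ *: _); ring.
Qed.

Lemma alt2_pos s s' k : s != s' -> (k < mdih (A s s') (A s' s))%N ->
  0 <= (alt2 (A s s') (A s' s) k 1 0).1 /\ 0 <= (alt2 (A s s') (A s' s) k 1 0).2.
Proof.
move=> ss.
have [[ha hb]|[[ha hb]|[[ha hb]|[[ha hb]|[[ha hb]|[ha hb]]]]]] := pair_cases ss;
 rewrite ha hb /mdih /=;
 by case: k => [|[|[|[|[|[|k]]]]]].
Qed.

Lemma altE_I2 x y k : all (I2 x y) (altE x y k).
Proof.
elim: k x y => //= k IH x y; rewrite all_rcons /I2 eqxx orbT /=.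
by apply: sub_all (IH y x) => z; rewrite I2C.
Qed.

Lemma dihedral s s' u : s != s' -> all (I2 s s') u ->
  (lenP (I2 s s') u <= lenP (I2 s s') (rcons u s))%N ->
  exists x y, [/\ 0 <= x, 0 <= y & actR u (ev s) = two2 s s' x y].
Proof.
move=> ss Pu hl.
have [t [Pt st ht]] := lenP_ex Pu.
have Is : I2 s s' s by rewrite /I2 eqxx.
have Is' : I2 s s' s' by rewrite /I2 eqxx orbT.
have small : forall t', all (I2 s s') t' -> w_eq t' (rcons u s) -> (size t' < size t)%N -> False.
  move=> t' Pt' h' lt; have := lenP_le Pt' h'; move: hl; rewrite -st; lia.
have nadj : forall p q z, t <> p ++ z :: z :: q.
  move=> p q z et.
  have : (lenP (I2 s s') u <= size (p ++ q))%N.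
    apply: lenP_le; first by move: Pt; rewrite et !all_cat /= => /and3P [-> _ /andP [_ ->]].
    apply: weq_trans (weq_sym (weq_ii p z q)) _; by rewrite /= -et.
  by rewrite -st et !size_cat /=; lia.
rewrite -(weq_actR _ ht).
move: Pt st ht nadj small; case/lastP: t => [|t z] Pt st ht nadj small.
  by exists 1, 0; rewrite /two2 scale1r scale0r addr0.
have : I2 s s' z by move: Pt; rewrite all_rcons => /andP [].
rewrite /I2 => /orP [/eqP zs|/eqP zs'].
  exfalso; apply: (small t); first by move: Pt; rewrite all_rcons => /andP [].
    apply: weq_trans _ (weq_rcons s ht) => l.
    by rewrite zs -!cats1 -catA actW_cat /= sWK.
  by rewrite size_rcons.
have tE : rcons t z = altE s s' (size (rcons t z)).
  by apply: altE_char => //; rewrite last_rcons.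
set m := mdih (A s s') (A s' s).
have [km|mk] := ltnP (size (rcons t z)) m.
  rewrite tE -[ev s](_ : two2 s s' 1 0 = ev s); last by rewrite /two2 scale1r scale0r addr0.
  rewrite alt2P //; have [h1 h2] := alt2_pos ss km.
  by exists (alt2 (A s s') (A s' s) (size (rcons t z)) 1 0).1,
            (alt2 (A s s') (A s' s) (size (rcons t z)) 1 0).2.
exfalso.
set T := rcons t z in Pt st ht nadj small tE mk.
set k := size T in st small tE mk.
have m1 : (0 < m)%N by rewrite /m /mdih; repeat case: ifP.
have ET : T = take (k - m) T ++ drop (k - m) T by rewrite cat_take_drop.
have sD : size (drop (k - m) T) = m by rewrite size_drop /k; lia.
have PT := Pt; rewrite ET all_cat in PT; case/andP: PT => Ptake PD.
have nD : forall p q z0, drop (k - m) T <> p ++ z0 :: z0 :: q.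
  by move=> p q z0 e; apply: (nadj (take (k - m) T ++ p) q z0); rewrite -catA -e -ET.
have lT : last s' T = s' by rewrite /T last_rcons zs'.
have lD : last s' (drop (k - m) T) = s'.
  move: lT; rewrite {1}ET last_cat.
  case E: (drop (k - m) T) => [|d0 ds]; first by move: sD; rewrite E /=; lia.
  by rewrite /=.
have DE := altE_char ss PD nD lD; rewrite sD in DE.
have br := braid ss; rewrite -/m in br.
have [m' em] : exists m', m = m'.+1 by exists m.-1; rewrite prednK.
apply: (small (take (k - m) T ++ altE s s' m')).
- by rewrite all_cat Ptake altE_I2.
- apply: weq_trans (weq_rcons s ht).
  rewrite [in X in w_eq _ X]ET DE -cats1 -catA; apply: weq_catl.
  apply: weq_trans (weq_sym (weq_catr [:: s] br)).
  rewrite em /= -cats1 -catA => l; by rewrite actW_cat /= sWK.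
- by rewrite size_cat size_takel ?leq_subr //= size_altE; lia.
Qed.

Definition nonneg (c : vec) := forall j, 0 <= c 0 j.
Definition nonpos (c : vec) := forall j, c 0 j <= 0.

Lemma exists_min (T : Type) (Q : T -> Prop) (f : T -> nat) :
  (exists x, Q x) -> exists x, Q x /\ forall y, Q y -> (f x <= f y)%N.
Proof.
move=> [x0 Qx0].
have ex : exists m, pb (exists x, Q x /\ f x = m) by exists (f x0); apply/pbP; exists x0.
case: (ex_minnP ex) => m /pbP [x [Qx fx]] hm.
exists x; split => // y Qy; rewrite fx; apply: hm; apply/pbP; by exists y.
Qed.

Lemma lenP_cons (P : pred 'I_n) i u : P i -> all P u -> (lenP P (i :: u) <= (lenP P u).+1)%N.
Proof.
move=> Pi Pu; have [t [Pt <- ht]] := lenP_ex Pu.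
apply: (@lenP_le P (i :: t)); first by rewrite /= Pi Pt.
by move=> l; rewrite /= ht.
Qed.

Theorem main54 k w s : len w = k -> (len w <= len (rcons w s))%N -> nonneg (actR w (ev s)).
Proof.
elim/ltn_ind: k w s => k IH w s hk hl.
have [t [st ht]] := len_ex w.
case/lastP: t st ht => [|t s'] st ht.
  move=> j; rewrite -(weq_actR _ ht) /= evE; by case: (s == j).
have k0 : (0 < k)%N by rewrite -hk -st size_rcons.
have ss : s != s'.
  apply/eqP => es; subst s'.
  have : (len (rcons w s) <= size t)%N.
    apply: len_le; apply: weq_trans (weq_rcons s ht) => l.
    by rewrite -!cats1 -catA actW_cat /= sWK.
  by move: hl st; rewrite size_rcons; lia.
set I := I2 s s'.
have Is : I s by rewrite /I /I2 eqxx.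
have Is' : I s' by rewrite /I /I2 eqxx orbT.
have lower : forall v u, all I u -> w_eq (v ++ u) w -> (k <= len v + lenP I u)%N.
  move=> v u Pu h; rewrite -hk; apply: leq_trans (len_cat h) _.
  by rewrite leq_add2l lenP_len.
pose cand (p : seq 'I_n * seq 'I_n) :=
  [/\ all I p.2, w_eq (p.1 ++ p.2) w & len p.1 + lenP I p.2 = k].
have c0 : cand (t, [:: s']).
  split => //=; first by rewrite Is'.
    by rewrite cats1.
  apply/eqP; rewrite eqn_leq lower /=; [|by rewrite Is'|by rewrite cats1].
  have := len_size t; have := @lenP_size I [:: s']; move: st; rewrite size_rcons /=; lia.
have [[v u] [[Pu hvu hk'] hmin]] := exists_min (fun p => len p.1) (ex_intro _ _ c0).
rewrite /= in Pu hvu hk' hmin.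
have lvk : (len v < k)%N.
  have := hmin _ c0; have := len_size t; move: st; rewrite size_rcons /=; lia.
have claim : forall x, I x -> (len v <= len (rcons v x))%N.
  move=> x Ix; rewrite leqNgt; apply/negP => lt.
  have cx : cand (rcons v x, x :: u).
    split => /=; first by rewrite Ix Pu.
      apply: weq_trans hvu; rewrite cat_rcons => l.
      by rewrite !actW_cat /= sWK.
    apply/eqP; rewrite eqn_leq lower /=; [|by rewrite Ix Pu|].
      have := lenP_cons Ix Pu; move: lt hk'; lia.
    apply: weq_trans hvu; rewrite cat_rcons => l; by rewrite !actW_cat /= sWK.
  by have := hmin _ cx; rewrite /=; lia.
have nv := IH _ lvk v s erefl (claim s Is).
have nv' := IH _ lvk v s' erefl (claim s' Is').
have hu : (lenP I u <= lenP I (rcons u s))%N.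
  rewrite leqNgt; apply/negP => lt.
  have : (len (rcons w s) <= len v + len (rcons u s))%N.
    apply: len_cat; rewrite -rcons_cat; exact: weq_rcons.
  have := @lenP_len I (rcons u s); rewrite all_rcons Is Pu => /(_ erefl).
  move: hl hk hk' lt; lia.
have [x [y [x0 y0 ex]]] := dihedral ss Pu hu.
move=> j; rewrite -(weq_actR _ hvu) actR_cat ex /two2 actR_lin actRZ !mxE.
by rewrite addr_ge0 // mulr_ge0.
Qed.

Lemma sR_ev i : sR i (ev i) = - ev i.
Proof. by rewrite sR_alt pairRC_evev; apply/rowP => k; rewrite !mxE; ring. Qed.

Lemma nonneg_nonpos (c : vec) : nonneg c -> nonpos c -> c = 0.
Proof. move=> h1 h2; apply/rowP => j; rewrite mxE; apply/eqP; by rewrite eq_le h1 h2. Qed.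

Lemma nonposN (c : vec) : nonneg c -> nonpos (- c).
Proof. by move=> h j; rewrite mxE oppr_le0. Qed.
Lemma nonnegN (c : vec) : nonpos c -> nonneg (- c).
Proof. by move=> h j; rewrite mxE oppr_ge0. Qed.

Lemma root_nz w i : actR w (ev i) != 0.
Proof.
apply/eqP => h; have := actR_revK w (ev i); rewrite h actR0 => /rowP /(_ i).
by rewrite !mxE eqxx.
Qed.

Lemma weq_rcons_ii w i : w_eq (rcons (rcons w i) i) w.
Proof. by move=> l; rewrite -!cats1 -catA actW_cat /= sWK. Qed.

Lemma main54_neg w s : (len (rcons w s) < len w)%N -> nonpos (actR w (ev s)).
Proof.
move=> lt.
have e : len (rcons (rcons w s) s) = len w by apply: len_weq; apply: weq_rcons_ii.
have := main54 erefl (_ : (len (rcons w s) <= len (rcons (rcons w s) s))%N).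
rewrite e => /(_ (ltnW lt)).
rewrite -cats1 actR_cat /= sR_ev actRN => h j.
by have := h j; rewrite mxE oppr_ge0.
Qed.

Lemma len_parity w s : len (rcons w s) != len w.
Proof.
apply/eqP => e.
have h1 : nonneg (actR w (ev s)) by apply: (main54 erefl); rewrite e.
have h2 : nonneg (actR (rcons w s) (ev s)).
  by apply: (main54 erefl); rewrite (len_weq (weq_rcons_ii w s)) e.
move: h2; rewrite -cats1 actR_cat /= sR_ev actRN => h2.
have h3 : nonpos (actR w (ev s)) by move=> j; have := h2 j; rewrite mxE oppr_ge0.
by move: (root_nz w s); rewrite (nonneg_nonpos h1 h3) eqxx.
Qed.

Lemma main54_lt w s : (len w < len (rcons w s))%N -> nonneg (actR w (ev s)).
Proof. by move=> h; apply: (main54 erefl); apply: ltnW. Qed.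

Lemma root_sign w i : nonneg (actR w (ev i)) \/ nonpos (actR w (ev i)).
Proof.
case: (leqP (len w) (len (rcons w i))) => h; first by left; apply: (main54 erefl).
by right; apply: main54_neg.
Qed.

Lemma vec_decomp (c : vec) : c = \sum_j c 0 j *: ev j.
Proof.
apply/rowP => k; rewrite summxE.
under eq_bigr do rewrite !mxE eq_sym.
by rewrite sum_ev.
Qed.

Lemma actR_sum w (F : 'I_n -> vec) : actR w (\sum_j F j) = \sum_j actR w (F j).
Proof. exact: (big_morph _ (actRD w) (actR0 w)). Qed.

Lemma actR_decomp w (c : vec) : actR w c = \sum_j c 0 j *: actR w (ev j).
Proof. by rewrite {1}(vec_decomp c) actR_sum; under eq_bigr do rewrite actRZ. Qed.

Lemma nonneg_map w (c : vec) : (forall k, 0 < c 0 k -> nonneg (actR w (ev k))) -> nonneg c ->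
  nonneg (actR w c).
Proof.
move=> h hc j; rewrite actR_decomp summxE; apply: sumr_ge0 => k _; rewrite !mxE.
have [ck0|ck0] := eqVneq (c 0 k) 0; first by rewrite ck0 mul0r.
have pk : 0 < c 0 k by rewrite lt0r ck0 hc.
by apply: mulr_ge0; [apply: ltW|apply: h].
Qed.

Lemma nonpos_map w (c : vec) : (forall k, nonpos (actR w (ev k))) -> nonneg c -> nonpos (actR w c).
Proof.
move=> h hc j; rewrite actR_decomp summxE -oppr_ge0 -sumrN; apply: sumr_ge0 => k _.
by rewrite mxE -mulrN mulr_ge0 // oppr_ge0; apply: h.
Qed.

Lemma len_rev w : len (rev w) = len w.
Proof.
have H : forall w, (len (rev w) <= len w)%N.
  move=> u; have [t [<- h]] := len_ex u; rewrite -size_rev; apply: len_le; exact: weq_rev.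
by apply/eqP; rewrite eqn_leq H -{1}[w]revK H.
Qed.

Lemma red_sub a b c : len (a ++ b ++ c) = size (a ++ b ++ c) -> len b = size b.
Proof.
move=> h; apply/eqP; rewrite eqn_leq len_size /=; rewrite leqNgt; apply/negP => lt.
have [t [st ht]] := len_ex b.
have : (len (a ++ b ++ c) <= size (a ++ t ++ c))%N.
  apply: len_le; apply: weq_catl; exact: weq_catr.
by rewrite h !size_cat st; lia.
Qed.

Lemma red_rcons_pos w i : len (rcons w i) = (size w).+1 -> nonneg (actR w (ev i)).
Proof. by move=> h; apply: main54_lt; rewrite h ltnS len_size. Qed.

Lemma longest_neg w0 : longest_word A w0 -> forall i, nonpos (actR w0 (ev i)).
Proof.
move=> [red hmax] i; move/reducedP: red => red.
apply: main54_neg; have [t [ht st]] := hmax (rcons w0 i).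
have := len_le ht; have := len_parity w0 i; rewrite red; move: st.
move=> a b /eqP c; lia.
Qed.

Lemma longest_rev w0 : longest_word A w0 -> longest_word A (rev w0).
Proof.
move=> [red hmax]; split.
  by apply/reducedP; rewrite len_rev size_rev; apply/reducedP.
by move=> s0; have [t [h1 h2]] := hmax s0; exists t; rewrite size_rev.
Qed.

Lemma w0_sq w0 : longest_word A w0 -> w_eq (w0 ++ w0) [::].
Proof.
move=> hw; set z := w0 ++ w0.
have [t [st ht]] := len_ex z.
case/lastP: t st ht => [|t i] st ht; first exact: weq_sym.
have hneg : nonpos (actR z (ev i)).
  apply: main54_neg; rewrite -st size_rcons ltnS.
  apply: len_le; apply: weq_trans (weq_rcons i ht) => l.
  by rewrite -!cats1 -catA actW_cat /= sWK.
have hpos : nonneg (actR z (ev i)).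
  rewrite /z actR_cat; set c := actR w0 (ev i).
  have hc : nonpos c by apply: longest_neg.
  have := nonpos_map (longest_neg hw) (nonnegN hc).
  by rewrite actRN => h j; have := h j; rewrite mxE oppr_le0.
by move: (root_nz z i); rewrite (nonneg_nonpos hpos hneg) eqxx.
Qed.

Lemma vw_red lam mu vw : min_length_word A lam mu vw -> len vw = size vw.
Proof.
move=> [hv hmin]; apply/eqP; rewrite eqn_leq len_size /=.
have [t [<- ht]] := len_ex vw; apply: hmin; by rewrite ht.
Qed.

Lemma vw_S lam mu vw i : min_length_word A lam mu vw -> lam 0 i = 0 ->
  nonneg (actR vw (ev i)).
Proof.
move=> [hv hmin] li; apply: (main54 erefl).
apply: leq_trans (len_size vw) _.
have [t [<- ht]] := len_ex (rcons vw i); apply: hmin.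
rewrite ht -cats1 actW_cat /= -hv; congr actW.
by rewrite /Defs.sW li scale0r subr0.
Qed.

Fixpoint cbetas (w : seq 'I_n) : seq vec :=
  if w is i :: w' then actC (rev w') (ev i) :: cbetas w' else [::].

Lemma betas_cat a b : betas A (a ++ b) = map (actR (rev b)) (betas A a) ++ betas A b.
Proof. by elim: a => //= i a ->; rewrite rev_cat actR_cat. Qed.

Lemma size_betas w : size (betas A w) = size w.
Proof. by elim: w => //= i w ->. Qed.

Lemma betas_split w j : (j < size w)%N -> exists p i q,
  [/\ w = p ++ i :: q, size p = j, nth 0 (betas A w) j = actR (rev q) (ev i)
    & nth 0 (cbetas w) j = actC (rev q) (ev i)].
Proof.
elim: w j => //= i w IH [|j] hj; first by exists [::], i, w.
have [p [i' [q [e1 e2 e3 e4]]]] := IH j hj.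
by exists (i :: p), i', q; split; [rewrite e1 | rewrite /= e2 | exact e3 | exact e4].
Qed.

Lemma betas_coroot w j : (j < size w)%N ->
  coroot (nth 0 (cbetas w) j) (nth 0 (betas A w) j).
Proof.
move=> hj; have [p [i [q [_ _ -> ->]]]] := betas_split hj.
apply: coroot_act; exact: coroot_ev.
Qed.

Lemma betas_root w j : (j < size w)%N -> is_root A (nth 0 (betas A w) j).
Proof. by move=> hj; have [p [i [q [_ _ -> _]]]] := betas_split hj; exists (rev q), i. Qed.

Lemma red_split_pos p i q : len (p ++ i :: q) = size (p ++ i :: q) ->
  nonneg (actR p (ev i)) /\ nonneg (actR (rev q) (ev i)).
Proof.
move=> h; split.
  apply: red_rcons_pos; rewrite -(size_rcons p i); apply: (@red_sub [::] _ q); by rewrite /= cat_rcons.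
apply: red_rcons_pos; rewrite -(size_rcons (rev q) i); apply: (@red_sub [::] _ (rev p)).
by rewrite /= -rev_cons -rev_cat len_rev size_rev.
Qed.

Lemma nth_betas_cat a b j : (size a <= j)%N ->
  nth 0 (betas A (a ++ b)) j = nth 0 (betas A b) (j - size a).
Proof. by move=> h; rewrite betas_cat nth_cat size_map size_betas ltnNge h. Qed.

Lemma gam_distinct v j j' : len v = size v -> (j < j')%N -> (j' < size v)%N ->
  nth 0 (betas A v) j != nth 0 (betas A v) j'.
Proof.
move=> red jj hj'.
have [p [i [Q [ev1 sp e1 _]]]] := betas_split (ltn_trans jj hj').
have hQ : (j' - j.+1 < size Q)%N by move: hj'; rewrite ev1 size_cat /= sp; lia.
have [q [i' [r [eQ sq e2 _]]]] := betas_split hQ.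
have e2' : nth 0 (betas A v) j' = actR (rev r) (ev i').
  rewrite ev1 -cat_rcons nth_betas_cat size_rcons sp // -e2; congr nth; lia.
rewrite e1 e2' eQ rev_cat /= rev_cons -cats1 actR_cat actR_cat /=.
apply/eqP => h.
have h1 : sR i' (actR (rev q) (ev i)) = ev i'.
  by have := congr1 (actR r) h; rewrite !actR_Krev.
have h2 : actR (rev q) (ev i) = - ev i' by rewrite -sR_ev -h1 sRK.
have red' : len (rev v) = size (rev v) by rewrite len_rev size_rev.
move: red'; rewrite ev1 eQ.
have E : rev (p ++ i :: q ++ i' :: r) = (rev r ++ [:: i']) ++ (rev q ++ [:: i]) ++ rev p.
  by rewrite rev_cat rev_cons rev_cat rev_cons -!cats1 -!catA.
rewrite E => red'; have hr := red_sub red'; rewrite cats1 size_rcons in hr.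
have := red_rcons_pos hr; rewrite h2 => /(_ i'); by rewrite !mxE eqxx.
Qed.

Lemma actR_out (t : seq 'I_n) (c : vec) k : all (fun x => x != k) t -> (actR t c) 0 k = c 0 k.
Proof.
elim: t => //= x t IH /andP [xk Pt]; rewrite /Defs.sR !mxE IH // (negPf xk) mulr0 subr0 //.
Qed.

Lemma parabolic_letters (S : {set 'I_n}) u : len u = size u -> in_parabolic A S u ->
  all (fun i => i \in S) u.
Proof.
elim/last_ind: u => // u i IH hred [t [Pt ht]].
have iS : i \in S.
  apply/negPn/negP => iS.
  have hneg : nonpos (actR (rcons u i) (ev i)).
    apply: main54_neg; rewrite hred size_rcons ltnS.
    rewrite (len_weq (weq_rcons_ii u i)); exact: len_size.
  have := hneg i; rewrite -(weq_actR _ ht) actR_out ?evE ?eqxx //.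
  by apply: sub_all Pt => x xS; apply/eqP => e; move: iS; rewrite -e xS.
rewrite all_rcons iS /=; apply: IH.
  by apply: (@red_sub [::] u [:: i]); rewrite /= cats1.
exists (rcons t i); split; first by rewrite all_rcons iS Pt.
apply: weq_trans (weq_rcons i ht) _; exact: weq_rcons_ii.
Qed.

Lemma beta_facts (lam : vec) (vw wSw : seq 'I_n) :
  len vw = size vw -> (forall i, lam 0 i = 0 -> nonneg (actR vw (ev i))) ->
  all (fun i => lam 0 i == 0) wSw ->
  (forall j, (j < size vw)%N -> nonneg (nth 0 (betas A (vw ++ wSw)) j) /\
     exists k, lam 0 k != 0 /\ 0 < (nth 0 (betas A (vw ++ wSw)) j) 0 k) /\
  (forall j j', (j < size vw)%N -> (j' < size (vw ++ wSw))%N ->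
     nth 0 (betas A (vw ++ wSw)) j = nth 0 (betas A (vw ++ wSw)) j' -> j = j').
Proof.
move=> red hS PS.
have bE : forall j, (j < size vw)%N ->
    nth 0 (betas A (vw ++ wSw)) j = actR (rev wSw) (nth 0 (betas A vw) j).
  move=> j hj; rewrite betas_cat nth_cat size_map size_betas hj.
  by rewrite (nth_map 0) // size_betas.
have outS : forall c k, lam 0 k != 0 -> (actR (rev wSw) c) 0 k = c 0 k.
  move=> c k lk; apply: actR_out; rewrite all_rev; apply: sub_all PS => x /eqP lx.
  by apply/eqP => e; move: lk; rewrite -e lx eqxx.
have gam : forall j, (j < size vw)%N -> nonneg (nth 0 (betas A vw) j) /\
    exists k, lam 0 k != 0 /\ 0 < (nth 0 (betas A vw) j) 0 k.
  move=> j hj; have [p [i [q [ev1 _ e1 _]]]] := betas_split hj.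
  have [hp hq] : nonneg (actR p (ev i)) /\ nonneg (actR (rev q) (ev i)).
    by apply: red_split_pos; rewrite -ev1.
  rewrite e1; split => //.
  apply: NNPP => hno.
  have hno' : forall k, lam 0 k != 0 -> (actR (rev q) (ev i)) 0 k <= 0.
    move=> k lk; rewrite leNgt; apply/negP => pk; apply: hno; by exists k.
  have hpos : nonneg (actR vw (actR (rev q) (ev i))).
    apply: nonneg_map => // k pk; apply: hS; apply/eqP/negP => /negP lk.
    by have := hno' k lk; rewrite leNgt pk.
  move: hpos; rewrite ev1 actR_cat /= actR_Krev sR_ev actRN => h.
  have hn : nonpos (actR p (ev i)) by move=> k; have := h k; rewrite mxE oppr_ge0.
  by move: (root_nz p i); rewrite (nonneg_nonpos hp hn) eqxx.
split.
  move=> j hj; have [gn [k [lk pk]]] := gam j hj; rewrite (bE j hj).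
  have [p [i [q [ev1 _ e1 _]]]] := betas_split hj.
  split; last by exists k; rewrite outS.
  case: (root_sign (rev wSw ++ rev q) i); rewrite actR_cat -e1 // => hn.
  by have := hn k; rewrite outS // leNgt pk.
move=> j j' hj hj' e.
have [gn [k [lk pk]]] := gam j hj.
case: (ltnP j' (size vw)) => hj'M.
  rewrite !bE // in e; have e' := can_inj (actR_Krev wSw) e.
  case: (ltngtP j j') => // lt.
    by have := gam_distinct red lt hj'M; rewrite e' eqxx.
  by have := gam_distinct red lt hj; rewrite e' eqxx.
exfalso; move: e; rewrite (bE j hj) nth_betas_cat //.
have hj2 : (j' - size vw < size wSw)%N by move: hj'; rewrite size_cat; lia.
have [p [i [q [ew _ e1 _]]]] := betas_split hj2; rewrite e1 => e.
have := congr1 (fun x : vec => x 0 k) e; rewrite /= outS // actR_out.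
  rewrite evE; case: (eqVneq i k) => [ik|_]; last by move=> h; move: pk; rewrite h ltxx.
  by move: PS lk; rewrite ew all_cat /= ik => /and3P [_ ->].
rewrite all_rev; move: PS; rewrite ew all_cat /= => /and3P [_ _ Pq].
apply: sub_all Pq => x /eqP lx; apply/eqP => ex; by move: lk; rewrite -ex lx eqxx.
Qed.

Lemma root_form (c : vec) : is_root A c -> 0 < form c c.
Proof. move=> [w [i ->]]; rewrite form_actR form_evev mulr_gt0 //. Qed.

Lemma root_neq0 (c : vec) : is_root A c -> c != 0.
Proof. by move=> [w [i ->]]; apply: root_nz. Qed.

Lemma rootN (c : vec) : is_root A c -> is_root A (- c).
Proof.
move=> [w [i ->]]; exists (rcons w i), i.
by rewrite -cats1 actR_cat /= sR_ev actRN.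
Qed.

Lemma root_act w (c : vec) : is_root A c -> is_root A (actR w c).
Proof. by move=> [w' [i ->]]; exists (w ++ w'), i; rewrite actR_cat. Qed.

Lemma tinv_p (mu : vec) b : tinv A d mu b -> 0 < pairWC mu b.1 /\ b.2 <= pairWC mu b.1.
Proof.
case: b => g r [[c [rc [cc hc]]] [c' [rc' [cc' hc']]]] /=.
rewrite /= in cc hc cc' hc'.
set p := pairWC mu g in hc' *.
have hle : r <= p.
  case: hc' => [h|[h _]]; first by move: h; rewrite oppr_gt0 subr_lt0 => /ltW.
  by move/eqP: h; rewrite oppr_eq0 subr_eq0 => /eqP ->.
split => //; rewrite ltNge; apply/negP => hp.
have r0 : r = 0.
  case: hc => [h|[-> _] //]; move: h hle hp; lia.
have p0 : p = 0 by move: hle hp; rewrite r0; lia.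
move: hc hc'; rewrite r0 p0 ltxx subrr oppr0 => - [//|[_ pc]] [//|[_ pc']].
have e : c' = - c.
  apply: (coroot_uniq_c cc' (coroot_N cc)); first exact: root_form.
  by rewrite formN; apply: root_form.
move: pc' => [_ hn]; rewrite e in hn.
have c0 : c = 0.
  apply: nonneg_nonpos; first by case: pc.
  by move=> j; have := hn j; rewrite mxE oppr_ge0.
by move: (root_neq0 rc); rewrite c0 eqxx.
Qed.

Lemma aPhi_facts (mu : vec) b : tinv A d mu b ->
  0 <= aPhi mu b /\ (aPhi mu b = 0 -> b.2 = pairWC mu b.1).
Proof.
move=> /tinv_p [hp hle]; rewrite /aPhi.
have hp' : 0 < (pairWC mu b.1)%:~R :> rat by rewrite ltr0z.
split.
  by apply: divr_ge0; [rewrite subr_ge0 ler_int | exact: ltW].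
move/eqP; rewrite mulf_eq0 invr_eq0 (gt_eqF hp') orbF subr_eq0 => /eqP.
by move/intr_inj.
Qed.

Lemma tinv_mk w0 (lam c g : vec) : longest_word A w0 -> is_root A c -> nonneg c ->
  coroot g c -> 0 < pairWC lam g ->
  let gb := actC (rev w0) g in
  tinv A d (actW w0 lam) (gb, pairWC (actW w0 lam) gb) /\ pairWC (actW w0 lam) gb = pairWC lam g.
Proof.
move=> hw rc nc cc hp gb.
have ep : pairWC (actW w0 lam) gb = pairWC lam g.
  rewrite pairWC_actW /gb -actC_cat -rev_cat (weq_actC _ (weq_rev (w0_sq hw))) //.
split => //.
have c0n : nonpos (actR (rev w0) c) by apply: nonpos_map => //; apply: longest_neg; apply: longest_rev.
split.
  exists (actR (rev w0) c); split; [exact: root_act|split; [exact: coroot_act|by left; rewrite /= ep]].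
exists (- actR (rev w0) c); split; [|split].
- by apply: rootN; apply: root_act.
- by rewrite /=; apply: coroot_N; apply: coroot_act.
- right; rewrite /= subrr oppr0; split => //; split; first by apply: rootN; apply: root_act.
  by move=> j; rewrite mxE oppr_ge0.
Qed.

Lemma size_tbetas phi phic (l : seq (option 'I_n)) : size (tbetas A phi phic l) = size l.
Proof. by elim: l => //= i l ->. Qed.

Lemma coroot_pos (g c : vec) : coroot g c -> 0 < form c c -> nonneg c -> nonneg g.
Proof.
move=> cc hf nc k; have := cc k; have := nc k; have := Hdpos k => dk ck e.
rewrite -(pmulr_rge0 _ hf) e; apply: mulr_ge0 => //; [apply: mulr_ge0 => // | exact: ltW].
Qed.

Lemma coroot_pos' (g c : vec) k : coroot g c -> 0 < form c c -> 0 < c 0 k -> 0 < g 0 k.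
Proof.
move=> cc hf ck; have := cc k; have := Hdpos k => dk e.
by rewrite -(pmulr_rgt0 _ hf) e mulr_gt0 // mulr_gt0.
Qed.

Lemma core (phi phic : vec) (w0 : seq 'I_n) (lam : vec) (vw wSw : seq 'I_n)
    (l : seq (option 'I_n)) :
  longest_word A w0 -> dominant lam ->
  min_length_word A lam (actW w0 lam) vw ->
  longest_parabolic_word A [set i | lam 0 i == 0] wSw ->
  card_is (tinv A d (actW w0 lam)) (size l) ->
  (forall k, (1 <= k < size l)%N ->
     prec' A d (actW w0 lam) w0 (vw ++ wSw) (nth (0, 0) (tbetas A phi phic l) k.-1)
       (nth (0, 0) (tbetas A phi phic l) k)) ->
  (forall b, tinv A d (actW w0 lam) b <->
     exists2 k, (1 <= k <= size l)%N & b = nth (0, 0) (tbetas A phi phic l) k.-1) ->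
  (size vw <= size l)%N /\
  forall k, (1 <= k <= size vw)%N ->
    coroot (actC w0 (nth (0, 0) (tbetas A phi phic l) k.-1).1)
      (nth 0 (betas A (vw ++ wSw)) k.-1).
Proof.
move=> Hw0 Hdom Hv HS Hcard Hord Henum.
set lamm := actW w0 lam; set iw := vw ++ wSw; set tb := tbetas A phi phic l.
have stb : size tb = size l by apply: size_tbetas.
have red_v := vw_red Hv.
have hS : forall i, lam 0 i = 0 -> nonneg (actR vw (ev i)) by move=> i; apply: vw_S Hv.
have PS : all (fun i => lam 0 i == 0) wSw.
  case: HS => redS [inpar _].
  have := parabolic_letters (proj1 (reducedP wSw) redS) inpar.
  by apply: sub_all => i; rewrite inE.
have [BF1 BF2] := beta_facts red_v hS PS.
have memtb : forall y, y \in tb <-> tinv A d lamm y.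
  move=> y; rewrite Henum; split.
    move=> /(nthP (0, 0)) [k hk <-]; exists k.+1 => //; by rewrite -stb.
  by move=> [k hk ->]; apply: mem_nth; rewrite stb; lia.
have Utb : uniq tb.
  case: Hcard => s0 [us [ss hs]].
  have e : s0 =i tb by move=> y; apply/idP/idP => h; [apply/memtb/hs | apply/hs/memtb].
  by rewrite (uniq_size_uniq us e) stb ss.
set b := fun j : nat => let gb := actC (rev w0) (nth 0 (cbetas iw) j.-1) in (gb, pairWC lamm gb).
have broot : forall j, (j < size iw)%N -> is_root A (nth 0 (betas A iw) j) by move=> j; apply: betas_root.
have h5 : forall y j j', phi_idx A d w0 iw y j -> phi_idx A d w0 iw y j' -> (j <= size vw)%N -> j = j'.
  move=> y j j' [hj cj] [hj' cj'] jM.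
  have r1 : is_root A (nth 0 (betas A iw) j.-1) by apply: broot; lia.
  have r2 : is_root A (nth 0 (betas A iw) j'.-1) by apply: broot; lia.
  have e := coroot_uniq_c cj cj' (root_form r1) (root_form r2).
  have h1 : (j.-1 < size vw)%N by lia.
  have h2 : (j'.-1 < size (vw ++ wSw))%N by rewrite -/iw; lia.
  have := BF2 _ _ h1 h2 e; lia.
have hJ1 : forall y j, phi_idx A d w0 iw y j -> (1 <= j)%N by move=> y j [/andP []].
have h4 : forall y j, y \in tb -> aPhi lamm y = 0 -> phi_idx A d w0 iw y j -> y = b j.
  move=> y j /memtb ty a0 [hj cj].
  have [_ e2] := aPhi_facts ty; have ey2 := e2 a0.
  have hj' : (j.-1 < size iw)%N by lia.
  have cg := betas_coroot hj'.
  have eg := coroot_uniq_g cj cg (negbT (gt_eqF (root_form (broot _ hj')))).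
  move: ey2 eg; clear e2; case: y {ty a0 cj} => g r /= ey2 eg.
  have eg' : g = actC (rev w0) (nth 0 (cbetas iw) j.-1) by rewrite -eg actC_revK.
  by rewrite /b /= -eg' ey2.
have h3 : forall j, (1 <= j <= size vw)%N ->
    [/\ b j \in tb, aPhi lamm (b j) = 0 & phi_idx A d w0 iw (b j) j].
  move=> j hj.
  have hj1 : (j.-1 < size vw)%N by lia.
  have hj2 : (j.-1 < size iw)%N by rewrite size_cat; lia.
  have [nb [k [lk pk]]] := BF1 _ hj1.
  have cg := betas_coroot hj2.
  have fc := root_form (broot _ hj2).
  have gn := coroot_pos cg fc nb.
  have gk := coroot_pos' cg fc pk.
  have gpos : 0 < pairWC lam (nth 0 (cbetas iw) j.-1).
    rewrite /pairWC (bigD1 k) //=; apply: ltr_pwDl.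
      by apply: mulr_gt0 => //; rewrite lt0r lk Hdom.
    by apply: sumr_ge0 => i _; apply: mulr_ge0; [apply: Hdom|apply: gn].
  have [tv ep] := tinv_mk Hw0 (broot _ hj2) nb cg gpos.
  split.
  - by apply/memtb; exact: tv.
  - by rewrite /aPhi /= subrr mul0r.
  - split; first by rewrite size_cat; lia.
    by rewrite /b /= actC_Krev.
have h1 : forall i, (i.+1 < size tb)%N -> exists j j',
    phi_idx A d w0 iw (nth (0, 0) tb i) j /\ phi_idx A d w0 iw (nth (0, 0) tb i.+1) j' /\
    ((aPhi lamm (nth (0, 0) tb i) < aPhi lamm (nth (0, 0) tb i.+1))%R \/
     (aPhi lamm (nth (0, 0) tb i) = aPhi lamm (nth (0, 0) tb i.+1) /\ (j < j')%N)).
  move=> i hi; have hi' : (1 <= i.+1 < size l)%N by rewrite -stb; lia.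
  exact: Hord i.+1 hi'.
have h2 : forall y, y \in tb -> (0 <= aPhi lamm y)%R.
  by move=> y /memtb ty; exact: (aPhi_facts ty).1.
have [hM hk] := sort_lemma Utb h1 h2 h3 h4 hJ1 h5.
split; first by rewrite -stb.
move=> k hk1; have hk2 : (k.-1 < size vw)%N by lia.
have := hk k.-1 hk2; rewrite prednK; last by lia.
move=> ->; rewrite /b /= actC_Krev; apply: betas_coroot; rewrite size_cat; lia.
Qed.

End Alg.

Unset Implicit Arguments.

Theorem corollary5p6 (n : nat) (A : 'M[int]_n) (d : 'I_n -> int)
    (phi phic : 'rV[int]_n) (w0 : seq 'I_n) (lam : 'rV[int]_n)
    (vw wSw : seq 'I_n) (uv : seq 'I_n) (unu : 'rV[int]_n)
    (l : seq (option 'I_n)) :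
  finite_simple_cartan A d ->
  highest_short_root A d phi -> is_coroot_of A d phic phi ->
  longest_word A w0 ->
  dominant lam ->
  let lamm := actW A w0 lam in
  let S := [set i | lam 0 i == 0] in
  min_length_word A lam lamm vw ->
  longest_parabolic_word A S wSw ->
  let iw := vw ++ wSw in
  let M := size vw in
  let L := size l in
  let tb := tbetas A phi phic l in
  in_Omega A d uv unu ->
  (forall b, wext_act A [::] lamm b = wext_act A uv unu (act_aff A phi phic l b)) ->
  card_is (tinv A d lamm) L ->
  (forall k, (1 <= k < L)%N ->
     prec' A d lamm w0 iw (nth (0, 0) tb k.-1) (nth (0, 0) tb k)) ->
  (forall b, tinv A d lamm b <-> exists2 k, (1 <= k <= L)%N & b = nth (0, 0) tb k.-1) ->
  (M <= L)%N /\
  forall k, (1 <= k <= M)%N ->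
    is_coroot_of A d (actC A w0 (nth (0, 0) tb k.-1).1) (nth 0 (betas A iw) k.-1).
Proof.
move=> HC hphi hphic Hw0 Hdom lamm S Hv HS iw M L tb HOm Hfact Hcard Hord Henum.
case: HC => _ [HAii [Hoff [Hzero [Hdpos [Hsym [Hform _]]]]]].
by apply: core.
Qed.
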